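(* Let $h:\mathbb{R}^n\to\mathbb{R}\cup\{+\infty\}$ be a proper closed convex function and $F:\mathbb{R}^n\to\mathbb{R}$ a convex function, $f:=F+h$, and suppose $f$ attains its minimum value $f^*$ at some $x^*$. Let $q\in[0,2)$, $L>0$, $\delta\ge0$, and suppose that for every $y\in\mathrm{dom}\, f$ one can compute $g(y)$ with $$0\le F(x)-\big(F(y)+\langle g(y),x-y\rangle\big)\le \frac{L}{2}\|x-y\|^2+\delta\|x-y\|^q\quad\text{for all }x\in\mathrm{dom}\, f.$$ Let $\rho>0$, $\alpha=\frac{1}{L+q\rho}$, $x_0\in\mathrm{dom}\, h$, and $x_{k+1}=\mathrm{prox}_{\alpha h}(x_k-\alpha g(x_k))$ for $k\ge0$, where $\mathrm{prox}_{\gamma h}(z):=\arg\min_{y\in\mathrm{dom}\, h}\{h(y)+\tfrac{1}{2\gamma}\|z-y\|^2\}$. Define $\hat x_k=\frac{1}{k+1}\sum_{i=0}^{k}x_{i+1}$ and $R=\|x_0-x^*\|$. Then for all $k\ge1$, $$f(\hat x_k)-f^*\le \frac{(L+q\rho)R^2}{2k}+\frac{(2-q)\,\delta^{\frac{2}{2-q}}}{2\rho^{\frac{q}{2-q}}}.$$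
   Context: $\|\cdot\|$ is the Euclidean norm. The two-sided inequality on $g(y)$ is the paper's ''inexact first-order $(\delta,L)$-oracle of degree $q$'' for convex $F$. *)

(* Defs.v *)
From HB Require Import structures.
From mathcomp Require Import all_boot all_order all_algebra.
From mathcomp Require Import all_classical all_reals all_analysis.
Set Implicit Arguments. Unset Strict Implicit. Unset Printing Implicit Defensive.
Import Order.TTheory GRing.Theory Num.Theory.
Local Open Scope ring_scope.

Section Defs.
Context {R : realType} {n : nat}.
Notation vec := 'rV[R]_n.

Definition dotv (u v : vec) : R := \sum_(i < n) u ord0 i * v ord0 i.
Definition enorm (u : vec) : R := Num.sqrt (dotv u u).

Definition edom (h : vec -> \bar R) : set vec := [set x | (h x < +oo)%E].

Definition proper_fun (h : vec -> \bar R) : Prop :=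
  (forall x, h x != -oo%E) /\ (exists x, (h x < +oo)%E).

(* closed = lower semicontinuous (w.r.t. the Euclidean norm) *)
Definition lsc_fun (h : vec -> \bar R) : Prop :=
  forall (x : vec) (a : R), (a%:E < h x)%E ->
    exists2 e : R, 0 < e & forall y, enorm (y - x) < e -> (a%:E < h y)%E.

Definition econvex_fun (h : vec -> \bar R) : Prop :=
  forall (x y : vec) (t : R), 0 <= t <= 1 ->
    (h (t *: x + (1 - t) *: y)%R <= t%:E * h x + (1 - t)%:E * h y)%E.

Definition convex_fun (F : vec -> R) : Prop :=
  forall (x y : vec) (t : R), 0 <= t <= 1 ->
    F (t *: x + (1 - t) *: y) <= t * F x + (1 - t) * F y.

Definition is_prox (gamma : R) (h : vec -> \bar R) (z p : vec) : Prop :=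
  edom h p /\
  forall y, edom h y ->
    (h p + ((2 * gamma)^-1 * enorm (z - p)%R ^+ 2)%R%:E
       <= h y + ((2 * gamma)^-1 * enorm (z - y)%R ^+ 2)%R%:E)%E.

End Defs.

(* Main.v *)
Require Import Defs.
From HB Require Import structures.
From mathcomp Require Import all_boot all_order all_algebra.
From mathcomp Require Import all_classical all_reals all_analysis.
From mathcomp.algebra_tactics Require Import ring lra.
Import Order.TTheory GRing.Theory Num.Theory.
Local Open Scope ring_scope.

Section Helpers.
Context {R : realType}.
Context {n : nat}.
Notation vec := 'rV[R]_n.

Lemma dotvDl (u v w : vec) : dotv (u + v) w = dotv u w + dotv v w.
Proof. rewrite /dotv -big_split; apply: eq_bigr => i _; by rewrite mxE mulrDl. Qed.
Lemma dotvZl a (u w : vec) : dotv (a *: u) w = a * dotv u w.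
Proof. rewrite /dotv mulr_sumr; apply: eq_bigr => i _; by rewrite mxE mulrA. Qed.
Lemma dotvNl (u w : vec) : dotv (- u) w = - dotv u w.
Proof. rewrite /dotv -sumrN; apply: eq_bigr => i _; by rewrite mxE mulNr. Qed.
Lemma dotvC (u w : vec) : dotv u w = dotv w u.
Proof. rewrite /dotv; apply: eq_bigr => i _; by rewrite mulrC. Qed.
Lemma dotvDr (u v w : vec) : dotv w (u + v) = dotv w u + dotv w v.
Proof. by rewrite dotvC dotvDl !(dotvC w). Qed.
Lemma dotvZr a (u w : vec) : dotv w (a *: u) = a * dotv w u.
Proof. by rewrite dotvC dotvZl (dotvC w). Qed.
Lemma dotvNr (u w : vec) : dotv w (- u) = - dotv w u.
Proof. by rewrite dotvC dotvNl (dotvC w). Qed.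
Lemma dotv_ge0 (u : vec) : 0 <= dotv u u.
Proof. rewrite /dotv; apply: sumr_ge0 => i _; exact: sqr_ge0. Qed.
Lemma enorm_sq (u : vec) : enorm u ^+ 2 = dotv u u.
Proof. by rewrite /enorm sqr_sqrtr // dotv_ge0. Qed.

Lemma young (q rho delta r : R) : 0 <= q < 2 -> 0 < rho -> 0 <= delta -> 0 <= r ->
  delta * r `^ q <= q * rho / 2 * r ^+ 2 +
     (2 - q) * delta `^ (2 / (2 - q)) / (2 * rho `^ (q / (2 - q))).
Proof.
move=> /andP[q0 q2] rho0 d0 r0.
have [->|qn0] := eqVneq q 0.
  rewrite powRr0 subr0 !mul0r powRr0 divff ?powRr1 //; last by lra.
have qp : 0 < q by rewrite lt_neqAle eq_sym qn0.
set a := delta * rho `^ (- (q / 2)).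
set b := rho `^ (q / 2) * r `^ q.
have -> : delta * r `^ q = a * b.
  rewrite /a /b mulrA -(mulrA delta) -powRD; last by apply/implyP => _; rewrite gt_eqF.
  by rewrite addNr powRr0 mulr1.
have := @conjugate_powR R a b (2 / (2 - q)) (2 / q).
rewrite /a /b.
have Hp : 0 < 2 / (2 - q) by apply: divr_gt0 => //; lra.
have Hq : 0 < 2 / q by apply: divr_gt0.
move=> /(_ (mulr_ge0 d0 (powR_ge0 _ _)) (mulr_ge0 (powR_ge0 _ _) (powR_ge0 _ _)) Hp Hq).
have -> : (2 / (2 - q))^-1 + (2 / q)^-1 = 1 by field; lra.
move=> /(_ erefl) H; apply: (le_trans H).
rewrite powRM ?powR_ge0 // powRM ?powR_ge0 //.
rewrite -!powRrM.
have -> : - (q / 2) * (2 / (2 - q)) = - (q / (2 - q)) by field; lra.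
have -> : q / 2 * (2 / q) = 1 by field.
have -> : q * (2 / q) = 2%:R by field.
rewrite powRr1 ?(ltW rho0) // powR_mulrn // powRN.
have hp : 0 < rho `^ (q / (2 - q)) by apply: powR_gt0.
rewrite addrC; apply: lerD.
  rewrite le_eqVlt; apply/orP; left; apply/eqP; field.
  all: first [exact: qn0 | by rewrite gt_eqF | lra | (apply/andP; split; [lra| rewrite gt_eqF]) ].
Qed.

Lemma dotv_expand (a b : vec) t :
  dotv (a - t *: b) (a - t *: b) = dotv a a - 2 * t * dotv a b + t ^+ 2 * dotv b b.
Proof.
rewrite !dotvDl !dotvDr !dotvNl !dotvNr !dotvZl !dotvZr (dotvC b a); ring.
Qed.

Lemma prox_lemma (M : R) (hr : vec -> R) (D : set vec) (w P Z : vec) :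
  0 < M ->
  (forall u v t, D u -> D v -> 0 <= t <= 1 ->
     D (t *: u + (1 - t) *: v) /\ hr (t *: u + (1 - t) *: v) <= t * hr u + (1 - t) * hr v) ->
  D P -> D Z ->
  (forall Y, D Y -> hr P + M / 2 * dotv (w - P) (w - P) <= hr Y + M / 2 * dotv (w - Y) (w - Y)) ->
  M * dotv (w - P) (Z - P) <= hr Z - hr P.
Proof.
move=> M0 hc DP DZ Hmin.
set B := dotv (w - P) (Z - P); set K := M / 2 * dotv (Z - P) (Z - P).
have K0 : 0 <= K by apply: mulr_ge0; [lra| exact: dotv_ge0].
have key : forall t, 0 < t <= 1 -> M * B <= hr Z - hr P + t * K.
  move=> t /andP[t0 t1].
  have [DY HY] := hc Z P t DZ DP (introT andP (conj (ltW t0) t1)).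
  have := Hmin _ DY.
  have -> : w - (t *: Z + (1 - t) *: P) = (w - P) - t *: (Z - P).
    by apply/rowP => i; rewrite !mxE; ring.
  rewrite dotv_expand -/B => H.
  have H2 : t * (M * B) <= t * (hr Z - hr P + t * K).
    rewrite /K; nra.
  by rewrite ler_pM2l in H2.
rewrite leNgt; apply/negP => Hlt.
set d := M * B - (hr Z - hr P).
have d0 : 0 < d by rewrite /d subr_gt0.
have := key (d / (d + K)).
have dK : 0 < d + K by lra.
have -> : 0 < d / (d + K) <= 1.
  apply/andP; split; first exact: divr_gt0.
  by rewrite ler_pdivrMr // mul1r; lra.
move=> /(_ erefl).
have : d / (d + K) * K < d.
  rewrite mulrAC ltr_pdivrMr //; nra.
rewrite /d; lra.
Qed.

Lemma jensen (phi : vec -> R) (D : set vec)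
  (hc : forall u v t, D u -> D v -> 0 <= t <= 1 ->
     D (t *: u + (1 - t) *: v) /\ phi (t *: u + (1 - t) *: v) <= t * phi u + (1 - t) * phi v)
  (p : nat -> vec) (Dp : forall i, D (p i)) (m : nat) :
  D ((m.+1%:R)^-1 *: \sum_(i < m.+1) p i) /\
  phi ((m.+1%:R)^-1 *: \sum_(i < m.+1) p i) <= (m.+1%:R)^-1 * \sum_(i < m.+1) phi (p i).
Proof.
elim: m => [|m [IHD IHphi]].
  by rewrite !big_ord1 invr1 scale1r mul1r; split.
have N0 : 0 < m.+1%:R :> R by rewrite ltr0Sn.
have -> : m.+2%:R = m.+1%:R + 1 :> R by rewrite -natr1.
set N : R := m.+1%:R in N0 IHD IHphi *.
set t := (N + 1)^-1.
have t01 : 0 <= t <= 1.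
  apply/andP; split; first by rewrite invr_ge0; lra.
  by rewrite invf_le1; lra.
set S := \sum_(i < m.+1) p i.
set Sf := \sum_(i < m.+1) phi (p i).
have -> : \sum_(i < m.+2) p i = S + p m.+1 by rewrite big_ord_recr.
have -> : \sum_(i < m.+2) phi (p i) = Sf + phi (p m.+1) by rewrite big_ord_recr.
have -> : t *: (S + p m.+1) = t *: p m.+1 + (1 - t) *: (N^-1 *: S).
  rewrite scalerDr addrC scalerA; congr (_ + _); congr (_ *: _); rewrite /t; field.
  by apply/andP; split; apply: lt0r_neq0 => //; lra.
have [Dc Hc] := hc _ _ _ (Dp m.+1) IHD t01.
split => //; apply: (le_trans Hc).
have -> : t * (Sf + phi (p m.+1)) = t * phi (p m.+1) + (1 - t) * (N^-1 * Sf).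
  rewrite /t; field.
  by apply/andP; split; apply: lt0r_neq0 => //; lra.
apply: lerD => //; apply: ler_wpM2l => //; lra.
Qed.
End Helpers.
Theorem corollary2 (R : realType) (n : nat)
  (h : 'rV[R]_n -> \bar R) (F : 'rV[R]_n -> R) (xs : 'rV[R]_n)
  (q L delta rho : R) (g : 'rV[R]_n -> 'rV[R]_n) (x : nat -> 'rV[R]_n) :
  proper_fun h -> lsc_fun h -> econvex_fun h -> convex_fun F ->
  (* x* minimizes f = F + h *)
  (forall z, ((F xs)%:E + h xs <= (F z)%:E + h z)%E) ->
  0 <= q < 2 -> 0 < L -> 0 <= delta ->
  (* inexact (delta, L)-oracle of degree q on dom f = dom h *)
  (forall y, edom h y -> forall z, edom h z ->
     0 <= F z - (F y + dotv (g y) (z - y)) <=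
       L / 2 * enorm (z - y) ^+ 2 + delta * (enorm (z - y)) `^ q) ->
  0 < rho ->
  edom h (x 0%N) ->
  (forall k, is_prox (L + q * rho)^-1 h
     (x k - (L + q * rho)^-1 *: g (x k)) (x k.+1)) ->
  forall k : nat, (1 <= k)%N ->
    let xhat := (k.+1%:R)^-1 *: \sum_(i < k.+1) x i.+1 in
    let Rd := enorm (x 0%N - xs) in
    ((F xhat)%:E + h xhat - ((F xs)%:E + h xs) <=
      ((L + q * rho) * Rd ^+ 2 / (2 * k%:R)
       + (2 - q) * delta `^ (2 / (2 - q)) / (2 * rho `^ (q / (2 - q))))%:E)%E.
Proof.
move=> [hNinf _] _ hconv Fconv Hmin q02 L0 d0 Hor rho0 Dx0 Hprox k k1; cbv zeta.
set xhat := (k.+1%:R^-1 *: _).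
set Rd := enorm (x 0%N - xs).
have /andP[q0 q2] := q02.
set M := L + q * rho.
have M0 : 0 < M by have := mulr_ge0 q0 (ltW rho0); rewrite /M; lra.
set c := (2 - q) * delta `^ (2 / (2 - q)) / (2 * rho `^ (q / (2 - q))).
pose hr u := fine (h u).
pose D := edom h.
have hE : forall u, D u -> h u = (hr u)%:E.
  move=> u Du; rewrite /hr fineK // fin_numE hNinf /=.
  by rewrite (lt_eqF Du).
have hc : forall u v t, D u -> D v -> 0 <= t <= 1 ->
     D (t *: u + (1 - t) *: v) /\ hr (t *: u + (1 - t) *: v) <= t * hr u + (1 - t) * hr v.
  move=> u v t Du Dv t01; have := hconv u v t t01.
  rewrite (hE u Du) (hE v Dv) -!EFinM -EFinD => H.
  have Dc : D (t *: u + (1 - t) *: v) by exact: (le_lt_trans H (ltry _)).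
  by split => //; rewrite (hE _ Dc) lee_fin in H.
have Dx : forall i, D (x i) by case => [|i] //; have [] := Hprox i.
have Dxs : D xs.
  have := Hmin (x 0%N); rewrite (hE _ Dx0) -EFinD.
  rewrite /D /edom /=; have := hNinf xs.
  by case: (h xs) => [r| |] //= _; rewrite ?ltry // addey.
have step : forall i, F (x i.+1) + hr (x i.+1) - (F xs + hr xs) <=
    M / 2 * (dotv (x i - xs) (x i - xs) - dotv (x i.+1 - xs) (x i.+1 - xs)) + c.
  move=> i.
  have [_ Hp] := Hprox i.
  set y := x i in Hp *; set P := x i.+1 in Hp *.
  set w := y - M^-1 *: g y in Hp.
  have Hmin' : forall Y, D Y -> hr P + M / 2 * dotv (w - P) (w - P) <= hr Y + M / 2 * dotv (w - Y) (w - Y).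
    move=> Y DY; have := Hp Y DY; rewrite (hE _ (Dx _)) (hE _ DY) -!EFinD lee_fin !enorm_sq.
    have -> : (2 * M^-1)^-1 = M / 2 by field; apply: lt0r_neq0.
    done.
  have Hpx := @prox_lemma R n _ _ _ _ _ _ M0 hc (Dx _) Dxs Hmin'.
  have eq1 : M * dotv (w - P) (xs - P) = M * dotv (y - P) (xs - P) - dotv (g y) (xs - P).
    have -> : w - P = (y - P) - M^-1 *: g y by apply/rowP => j; rewrite !mxE; ring.
    by rewrite dotvDl dotvNl dotvZl mulrBr mulrA mulfV ?mul1r // gt_eqF.
  rewrite eq1 in Hpx.
  have /andP[lo _] := Hor y (Dx i) xs Dxs.
  have /andP[_ up] := Hor y (Dx i) P (Dx _).
  have Y := @young R q rho delta (enorm (P - y)) q02 rho0 d0 (sqrtr_ge0 _).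
  rewrite -/c enorm_sq in Y; rewrite enorm_sq in up.
  move: Hpx lo up Y.
  rewrite !dotvDl !dotvDr !dotvNl !dotvNr.
  rewrite (dotvC P y) (dotvC xs y) (dotvC xs P) -/P /M; lra.
pose fs := F xs + hr xs.
pose d i := dotv (x i - xs) (x i - xs).
have tel : forall m, \sum_(i < m) (F (x i.+1) + hr (x i.+1)) <=
    m%:R * fs + M / 2 * (d 0%N - d m) + m%:R * c.
  elim => [|m IH]; first by rewrite big_ord0 subrr !mul0r mulr0 !addr0.
  rewrite big_ord_recr /= -natr1.
  have := step m; rewrite -/fs -/(d m) -/(d m.+1); move: IH; rewrite /M; lra.
have hcf : forall u v t, D u -> D v -> 0 <= t <= 1 ->
     D (t *: u + (1 - t) *: v) /\ (fun z => F z + hr z) (t *: u + (1 - t) *: v)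
       <= t * (fun z => F z + hr z) u + (1 - t) * (fun z => F z + hr z) v.
  move=> u v t Du Dv t01; have [Dc Hc] := hc u v t Du Dv t01.
  split => //=; have := Fconv u v t t01; lra.
have [Dxh Hxh] := @jensen R n (fun z => F z + hr z) D hcf (fun i => x i.+1) (fun i => Dx i.+1) k.
rewrite -/xhat /= in Dxh Hxh.
rewrite (hE _ Dxh) (hE _ Dxs) -!EFinD lee_fin.
have := tel k.+1; rewrite -/fs => T.
have dk0 : 0 <= d k.+1 by exact: dotv_ge0.
have K1 : 1 <= k%:R :> R by rewrite ler1n.
have -> : Rd ^+ 2 = d 0%N by rewrite enorm_sq.
have d00 : 0 <= d 0%N by exact: dotv_ge0.
set S := \sum_(i < k.+1) (F (x i.+1) + hr (x i.+1)) in T Hxh.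
move: Hxh T; rewrite -natr1.
set K := k%:R => Hxh T.
have N0 : 0 < K + 1 by lra.
have H1 : (K + 1)^-1 * S <= fs + M / 2 * d 0%N / (K + 1) + c.
  have : (K + 1)^-1 * S <= (K + 1)^-1 * ((K + 1) * fs + M / 2 * d 0%N + (K + 1) * c).
    apply: ler_wpM2l; first by rewrite invr_ge0; lra.
    have : 0 <= M / 2 * d k.+1 by apply: mulr_ge0 => //; lra.
    lra.
  have -> : (K + 1)^-1 * ((K + 1) * fs + M / 2 * d 0%N + (K + 1) * c) =
            fs + M / 2 * d 0%N / (K + 1) + c.
    by field; apply: lt0r_neq0.
  done.
have H2 : M / 2 * d 0%N / (K + 1) <= M * d 0%N / (2 * K).
  have -> : M * d 0%N / (2 * K) = M / 2 * d 0%N / K by field; apply: lt0r_neq0; lra.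
  apply: ler_wpM2l; first by apply: mulr_ge0 => //; lra.
  by rewrite lef_pV2 ?posrE; lra.
lra.
Qed.
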